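(* Let $n_x,n_y,n_z$ be pairwise relatively prime positive integers. Every knot in $\mathcal{L}(n_x,n_y,n_z)$ can be represented (up to mirror image) as a Lissajous knot with frequencies $(n_x,n_y,n_z)$, with $\phi_x=0$, and with phase shift pair $(\phi_y,\phi_z)\in[0,\frac{\pi}{n_x}]\times[0,\pi]$.
   Context: A Lissajous knot is a knot in $\mathbb{R}^3$ admitting a parameterization $K(t)=(\cos(n_xt+\phi_x),\cos(n_yt+\phi_y),\cos(n_zt+\phi_z))$, $0\le t\le 2\pi$, where the frequencies $n_x,n_y,n_z$ are integers and the phase shifts $\phi_x,\phi_y,\phi_z$ are real numbers (chosen so that the curve is embedded). $\mathcal{L}(n_x,n_y,n_z)$ denotes the set of knot types of all Lissajous knots with frequencies $n_x,n_y,n_z$, where a knot and its mirror image are considered equivalent. *)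

(* Defs.v *)
From Stdlib Require Import Reals Lra Arith.
Open Scope R_scope.

Definition pt : Type := (R * R * R)%type.

Definition lissajous (nx ny nz : nat) (px py pz : R) (t : R) : pt :=
  (cos (INR nx * t + px), cos (INR ny * t + py), cos (INR nz * t + pz)).

Definition embedded (nx ny nz : nat) (px py pz : R) : Prop :=
  forall s t, 0 <= s < 2 * PI -> 0 <= t < 2 * PI ->
    lissajous nx ny nz px py pz s = lissajous nx ny nz px py pz t -> s = t.

Definition curve_image (K : R -> pt) : pt -> Prop :=
  fun p => exists t, 0 <= t <= 2 * PI /\ K t = p.

Definition dist3 (p q : pt) : R :=
  let '(x1, y1, z1) := p in let '(x2, y2, z2) := q in
  Rmax (Rabs (x1 - x2)) (Rmax (Rabs (y1 - y2)) (Rabs (z1 - z2))).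

Definition cont3 (f : pt -> pt) : Prop :=
  forall x eps, 0 < eps -> exists delta, 0 < delta /\
    forall y, dist3 y x < delta -> dist3 (f y) (f x) < eps.

Definition homeo3 (f : pt -> pt) : Prop :=
  exists g : pt -> pt,
    (forall x, g (f x) = x) /\ (forall y, f (g y) = y) /\ cont3 f /\ cont3 g.

Definition ambient_isotopy (H : R -> pt -> pt) : Prop :=
  (forall x, H 0 x = x) /\
  (forall t, 0 <= t <= 1 -> homeo3 (H t)) /\
  (forall t x eps, 0 <= t <= 1 -> 0 < eps -> exists delta, 0 < delta /\
     forall s y, 0 <= s <= 1 -> Rabs (s - t) < delta -> dist3 y x < delta ->
       dist3 (H s y) (H t x) < eps).

Definition knot_equiv (A B : pt -> Prop) : Prop :=
  exists H, ambient_isotopy H /\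
    forall p, B p <-> exists q, A q /\ H 1 q = p.

Definition mirror_pt (p : pt) : pt := let '(x, y, z) := p in (x, y, - z).
Definition mirror (A : pt -> Prop) : pt -> Prop := fun p => A (mirror_pt p).

Definition knot_equiv_up_to_mirror (A B : pt -> Prop) : Prop :=
  knot_equiv A B \/ knot_equiv A (mirror B).

(* Main.v *)
Require Import Defs.
From Stdlib Require Import Reals Arith Lra Lia ZArith Znumtheory.
Open Scope R_scope.

Lemma dist3_lt x1 y1 z1 x2 y2 z2 d :
  dist3 (x1,y1,z1) (x2,y2,z2) < d <->
  Rabs (x1-x2) < d /\ Rabs (y1-y2) < d /\ Rabs (z1-z2) < d.
Proof. unfold dist3. rewrite !Rmax_Rlt. tauto. Qed.

Lemma sin_abs_le x : Rabs (sin x) <= Rabs x.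
Proof.
  assert (H: forall y, 0 < y -> Rabs (sin y) <= y).
  { intros y Hy. pose proof (sin_lt_x y Hy). pose proof (SIN_bound y).
    destruct (Rlt_or_le y 1).
    - assert (0 < sin y) by (apply sin_gt_0; pose proof PI_RGT_0;
        pose proof PI2_1 ; lra).
      rewrite Rabs_right; lra.
    - apply Rabs_le; lra. }
  destruct (Rtotal_order x 0) as [Hx|[Hx|Hx]].
  - replace (sin x) with (- sin (-x)) by (rewrite sin_neg; ring).
    rewrite Rabs_Ropp, (Rabs_left x) by lra. apply H; lra.
  - subst. rewrite sin_0, Rabs_R0. lra.
  - rewrite (Rabs_right x) by lra. apply H; lra.
Qed.

Lemma cos_lip a b : Rabs (cos a - cos b) <= Rabs (a - b).
Proof.
  rewrite form2. rewrite !Rabs_mult.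
  pose proof (sin_abs_le ((a-b)/2)). pose proof (SIN_bound ((a+b)/2)).
  assert (Rabs (sin ((a + b) / 2)) <= 1) by (apply Rabs_le; lra).
  replace (Rabs (a-b)) with (Rabs (-2) * Rabs ((a-b)/2)).
  2:{ rewrite <- Rabs_mult, <- Rabs_Ropp. f_equal. field. }
  rewrite Rmult_assoc. apply Rmult_le_compat_l. apply Rabs_pos.
  rewrite <- (Rmult_1_r (Rabs ((a-b)/2))).
  apply Rmult_le_compat; try apply Rabs_pos; lra.
Qed.

Lemma sin_lip a b : Rabs (sin a - sin b) <= Rabs (a - b).
Proof.
  rewrite form4. rewrite !Rabs_mult.
  pose proof (sin_abs_le ((a-b)/2)). pose proof (COS_bound ((a+b)/2)).
  assert (Rabs (cos ((a + b) / 2)) <= 1) by (apply Rabs_le; lra).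
  replace (Rabs (a-b)) with (Rabs 2 * Rabs ((a-b)/2)).
  2:{ rewrite <- Rabs_mult. f_equal. field. }
  rewrite Rmult_assoc. apply Rmult_le_compat_l. apply Rabs_pos.
  rewrite <- (Rmult_1_l (Rabs ((a-b)/2))).
  apply Rmult_le_compat; try apply Rabs_pos; lra.
Qed.

Definition Rz (s : R) (p : pt) : pt :=
  let '(x, y, z) := p in
  (x * cos (PI * s) - y * sin (PI * s), x * sin (PI * s) + y * cos (PI * s), z).

Lemma lin_est u1 u2 v1 v2 p q p' q' d L :
  Rabs p <= 1 -> Rabs q <= 1 -> Rabs (u1 - v1) < d -> Rabs (u2 - v2) < d ->
  Rabs (p - p') <= L -> Rabs (q - q') <= L ->
  Rabs ((u1 * p + u2 * q) - (v1 * p' + v2 * q')) <= 2 * d + (Rabs v1 + Rabs v2) * L.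
Proof.
  intros Hp Hq H1 H2 H3 H4.
  replace ((u1 * p + u2 * q) - (v1 * p' + v2 * q')) with
    (((u1 - v1) * p + v1 * (p - p')) + ((u2 - v2) * q + v2 * (q - q'))) by ring.
  eapply Rle_trans. apply Rabs_triang.
  eapply Rle_trans. apply Rplus_le_compat; apply Rabs_triang.
  rewrite !Rabs_mult.
  pose proof (Rabs_pos (u1 - v1)). pose proof (Rabs_pos (u2 - v2)).
  pose proof (Rabs_pos v1). pose proof (Rabs_pos v2).
  pose proof (Rabs_pos (p - p')). pose proof (Rabs_pos (q - q')).
  pose proof (Rabs_pos p). pose proof (Rabs_pos q).
  nra.
Qed.

Lemma Rz_joint t x1 x2 x3 eps : 0 < eps -> exists delta, 0 < delta /\
  forall s y, Rabs (s - t) < delta -> dist3 y (x1, x2, x3) < delta ->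
    dist3 (Rz s y) (Rz t (x1, x2, x3)) < eps.
Proof.
  intro He. pose proof PI_RGT_0 as HPI.
  set (M := Rabs x1 + Rabs x2).
  assert (HM : 0 <= M) by (unfold M; pose proof (Rabs_pos x1); pose proof (Rabs_pos x2); lra).
  assert (Hden : 0 < 3 + M * PI) by nra.
  exists (eps / (3 + M * PI)). split. { apply Rdiv_lt_0_compat; lra. }
  set (d := eps / (3 + M * PI)).
  assert (Hd : d * (3 + M * PI) = eps) by (unfold d; field; lra).
  assert (Hdp : 0 < d) by (unfold d; apply Rdiv_lt_0_compat; lra).
  intros s [[y1 y2] y3] Hs Hy. rewrite dist3_lt in Hy. destruct Hy as (Hy1 & Hy2 & Hy3).
  assert (HL1 : Rabs (cos (PI * s) - cos (PI * t)) <= PI * d).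
  { eapply Rle_trans. apply cos_lip.
    replace (PI * s - PI * t) with (PI * (s - t)) by ring. rewrite Rabs_mult, (Rabs_right PI) by lra.
    nra. }
  assert (HL2 : Rabs (sin (PI * s) - sin (PI * t)) <= PI * d).
  { eapply Rle_trans. apply sin_lip.
    replace (PI * s - PI * t) with (PI * (s - t)) by ring. rewrite Rabs_mult, (Rabs_right PI) by lra.
    nra. }
  assert (HL3 : Rabs (- sin (PI * s) - - sin (PI * t)) <= PI * d).
  { replace (- sin (PI * s) - - sin (PI * t)) with (- (sin (PI * s) - sin (PI * t))) by ring.
    rewrite Rabs_Ropp. exact HL2. }
  assert (Hc : Rabs (cos (PI * s)) <= 1) by (apply Rabs_le; apply COS_bound).
  assert (Hsn : Rabs (sin (PI * s)) <= 1) by (apply Rabs_le; apply SIN_bound).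
  assert (Hsn' : Rabs (- sin (PI * s)) <= 1) by (rewrite Rabs_Ropp; exact Hsn).
  assert (Hfin : 2 * d + M * (PI * d) < eps) by nra.
  unfold Rz. rewrite dist3_lt. split; [|split].
  - pose proof (lin_est y1 y2 x1 x2 _ _ _ _ d (PI * d) Hc Hsn' Hy1 Hy2 HL1 HL3).
    fold M in H.
    replace (y1 * cos (PI * s) - y2 * sin (PI * s) - (x1 * cos (PI * t) - x2 * sin (PI * t)))
      with (y1 * cos (PI * s) + y2 * - sin (PI * s) - (x1 * cos (PI * t) + x2 * - sin (PI * t))) by ring.
    lra.
  - pose proof (lin_est y1 y2 x1 x2 _ _ _ _ d (PI * d) Hsn Hc Hy1 Hy2 HL2 HL1).
    fold M in H. lra.
  - assert (0 <= M * (PI * d)) by (apply Rmult_le_pos; nra). lra.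
Qed.

Lemma Rz_cont s : cont3 (Rz s).
Proof.
  intros [[x1 x2] x3] eps He.
  destruct (Rz_joint s x1 x2 x3 eps He) as [d [Hd H]].
  exists d. split; auto. intros y Hy. apply H; auto.
  replace (s - s) with 0 by ring. rewrite Rabs_R0. lra.
Qed.

Lemma Rz_inv s p : Rz (- s) (Rz s p) = p.
Proof.
  destruct p as [[x y] z]. unfold Rz.
  replace (PI * - s) with (- (PI * s)) by ring. rewrite cos_neg, sin_neg.
  pose proof (sin2_cos2 (PI * s)). unfold Rsqr in H.
  apply (f_equal2 pair); [apply (f_equal2 pair)|]; try reflexivity;
  lazymatch goal with |- ?L = ?v =>
    transitivity (v * (sin (PI * s) * sin (PI * s) + cos (PI * s) * cos (PI * s)));
    [ring | rewrite H; ring] end.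
Qed.

Lemma Rz_isotopy : ambient_isotopy Rz.
Proof.
  split; [|split].
  - intros [[x y] z]. unfold Rz. rewrite Rmult_0_r, cos_0, sin_0. apply (f_equal2 pair); [apply (f_equal2 pair)|]; ring.
  - intros t _. exists (Rz (- t)). split; [|split; [|split]].
    + apply Rz_inv.
    + intro y. pose proof (Rz_inv (- t) y). rewrite Ropp_involutive in H. exact H.
    + apply Rz_cont.
    + apply Rz_cont.
  - intros t [[x1 x2] x3] eps _ He.
    destruct (Rz_joint t x1 x2 x3 eps He) as [d [Hd H]].
    exists d. split; auto.
Qed.

Lemma Rz_1 x y z : Rz 1 (x, y, z) = (- x, - y, z).
Proof. unfold Rz. rewrite Rmult_1_r, cos_PI, sin_PI. apply (f_equal2 pair); [apply (f_equal2 pair)|]; ring. Qed.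

Lemma conj_isotopy (H : R -> pt -> pt) (P Q : pt -> pt) :
  ambient_isotopy H -> (forall p, Q (P p) = p) -> (forall p, P (Q p) = p) ->
  (forall a b d, dist3 (P a) (P b) < d <-> dist3 a b < d) ->
  (forall a b d, dist3 (Q a) (Q b) < d <-> dist3 a b < d) ->
  ambient_isotopy (fun s p => Q (H s (P p))).
Proof.
  intros [H0 [Hh Hj]] QP PQ IP IQ.
  split; [|split].
  - intro x. rewrite H0. apply QP.
  - intros t Ht. destruct (Hh t Ht) as [g [G1 [G2 [C1 C2]]]].
    exists (fun y => Q (g (P y))). split; [|split; [|split]].
    + intro x. rewrite PQ, G1, QP. reflexivity.
    + intro y. rewrite PQ, G2, QP. reflexivity.
    + intros x eps He. destruct (C1 (P x) eps He) as [d [Hd Hd']].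
      exists d. split; auto. intros y Hy. apply IQ. apply Hd'. apply IP. exact Hy.
    + intros x eps He. destruct (C2 (P x) eps He) as [d [Hd Hd']].
      exists d. split; auto. intros y Hy. apply IQ. apply Hd'. apply IP. exact Hy.
  - intros t x eps Ht He. destruct (Hj t (P x) eps Ht He) as [d [Hd Hd']].
    exists d. split; auto. intros s y Hs Hst Hy. apply IQ. apply Hd'; auto. apply IP. exact Hy.
Qed.

Definition cyc (p : pt) : pt := let '(x, y, z) := p in (y, z, x).
Definition cycinv (p : pt) : pt := let '(x, y, z) := p in (z, x, y).

Lemma cyc_inv1 p : cycinv (cyc p) = p. Proof. destruct p as [[x y] z]; reflexivity. Qed.
Lemma cyc_inv2 p : cyc (cycinv p) = p. Proof. destruct p as [[x y] z]; reflexivity. Qed.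
Lemma cyc_eq x y z : cyc (x, y, z) = (y, z, x). Proof. reflexivity. Qed.
Lemma cycinv_eq x y z : cycinv (x, y, z) = (z, x, y). Proof. reflexivity. Qed.
Lemma cyc_iso a b d : dist3 (cyc a) (cyc b) < d <-> dist3 a b < d.
Proof. destruct a as [[x y] z]; destruct b as [[x' y'] z']; rewrite !cyc_eq, !dist3_lt; tauto. Qed.
Lemma cycinv_iso a b d : dist3 (cycinv a) (cycinv b) < d <-> dist3 a b < d.
Proof. destruct a as [[x y] z]; destruct b as [[x' y'] z']; rewrite !cycinv_eq, !dist3_lt; tauto. Qed.

Definition Rx (s : R) (p : pt) : pt := cycinv (Rz s (cyc p)).
Definition Ry (s : R) (p : pt) : pt := cycinv (cycinv (Rz s (cyc (cyc p)))).

Lemma Rx_isotopy : ambient_isotopy Rx.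
Proof.
  apply (conj_isotopy Rz cyc cycinv Rz_isotopy cyc_inv1 cyc_inv2 cyc_iso cycinv_iso).
Qed.

Lemma Ry_isotopy : ambient_isotopy Ry.
Proof.
  apply (conj_isotopy Rz (fun p => cyc (cyc p)) (fun p => cycinv (cycinv p)) Rz_isotopy).
  - intro p. rewrite cyc_inv1. apply cyc_inv1.
  - intro p. rewrite cyc_inv2. apply cyc_inv2.
  - intros a b d. rewrite cyc_iso. apply cyc_iso.
  - intros a b d. rewrite cycinv_iso. apply cycinv_iso.
Qed.

Lemma Rx_1 x y z : Rx 1 (x, y, z) = (x, - y, - z).
Proof. unfold Rx. rewrite cyc_eq, Rz_1. reflexivity. Qed.
Lemma Ry_1 x y z : Ry 1 (x, y, z) = (- x, y, - z).
Proof. unfold Ry. rewrite !cyc_eq, Rz_1. reflexivity. Qed.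

Lemma Id_isotopy : ambient_isotopy (fun _ p => p).
Proof.
  split; [|split].
  - reflexivity.
  - intros t _. exists (fun p => p). repeat split; intros x eps He; exists eps; split; auto.
  - intros t x eps _ He. exists eps. split; auto.
Qed.

Definition smap (ex ey ez : R) (p : pt) : pt :=
  let '(x, y, z) := p in (ex * x, ey * y, ez * z).

Definition img (f : pt -> pt) (A : pt -> Prop) : pt -> Prop :=
  fun p => exists q, A q /\ f q = p.

Lemma ke_of H T A : ambient_isotopy H -> (forall q, H 1 q = T q) -> knot_equiv A (img T A).
Proof.
  intros HI HT. exists H. split; auto. intro p. unfold img.
  split; intros [q [Aq E]]; exists q; rewrite HT in *; auto.
Qed.

Lemma ke_ext A B B' : knot_equiv A B -> (forall p, B p <-> B' p) -> knot_equiv A B'.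
Proof.
  intros [H [HI HB]] E. exists H. split; auto. intro p. rewrite <- E. apply HB.
Qed.

Lemma ke_mirror A T S : knot_equiv A (img T A) -> (forall q, T q = mirror_pt (S q)) ->
  knot_equiv A (mirror (img S A)).
Proof.
  intros K HT. apply (ke_ext _ _ _ K). intro p. unfold img, mirror.
  split; intros [q [Aq E]]; exists q; split; auto.
  - rewrite HT in E. rewrite <- E. destruct (S q) as [[a b] c]. simpl. f_equal. ring.
  - rewrite HT, E. destruct p as [[a b] c]. simpl. f_equal. ring.
Qed.

Lemma sign_case (A : pt -> Prop) ex ey ez :
  (ex = 1 \/ ex = -1) -> (ey = 1 \/ ey = -1) -> (ez = 1 \/ ez = -1) ->
  knot_equiv_up_to_mirror A (img (smap ex ey ez) A).
Proof.
  intros Hx Hy Hz. unfold knot_equiv_up_to_mirror.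
  destruct Hx as [->| ->]; destruct Hy as [->| ->]; destruct Hz as [->| ->].
  - left. apply (ke_of (fun _ p => p)). apply Id_isotopy.
    intros [[a b] c]. simpl. f_equal; [f_equal|]; ring.
  - right. apply (ke_mirror _ (fun p => p)). apply (ke_of (fun _ p => p)). apply Id_isotopy.
    reflexivity. intros [[a b] c]. simpl. f_equal; [f_equal|]; ring.
  - right. apply (ke_mirror _ (Rx 1)). apply (ke_of Rx). apply Rx_isotopy.
    reflexivity. intros [[a b] c]. rewrite Rx_1. simpl. f_equal; [f_equal|]; ring.
  - left. apply (ke_of Rx). apply Rx_isotopy.
    intros [[a b] c]. rewrite Rx_1. simpl. f_equal; [f_equal|]; ring.
  - right. apply (ke_mirror _ (Ry 1)). apply (ke_of Ry). apply Ry_isotopy.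
    reflexivity. intros [[a b] c]. rewrite Ry_1. simpl. f_equal; [f_equal|]; ring.
  - left. apply (ke_of Ry). apply Ry_isotopy.
    intros [[a b] c]. rewrite Ry_1. simpl. f_equal; [f_equal|]; ring.
  - left. apply (ke_of Rz). apply Rz_isotopy.
    intros [[a b] c]. rewrite Rz_1. simpl. f_equal; [f_equal|]; ring.
  - right. apply (ke_mirror _ (Rz 1)). apply (ke_of Rz). apply Rz_isotopy.
    reflexivity. intros [[a b] c]. rewrite Rz_1. simpl. f_equal; [f_equal|]; ring.
Qed.

Lemma cos_Zperiod x j : cos (x + 2 * IZR j * PI) = cos x.
Proof.
  destruct (Z_le_gt_dec 0 j) as [Hj|Hj].
  - rewrite <- (Z2Nat.id j) by lia. rewrite <- INR_IZR_INZ. apply cos_period.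
  - replace j with (- Z.of_nat (Z.to_nat (- j)))%Z by lia.
    rewrite opp_IZR, <- INR_IZR_INZ.
    set (n := Z.to_nat (-j)).
    rewrite <- (cos_period (x + 2 * - INR n * PI) n). f_equal. ring.
Qed.

Definition sgn (j : Z) : R := if Z.even j then 1 else -1.

Lemma sgn_pm j : sgn j = 1 \/ sgn j = -1.
Proof. unfold sgn. destruct (Z.even j); auto. Qed.

Lemma cos_kpi x j : cos (x + IZR j * PI) = sgn j * cos x.
Proof.
  unfold sgn. destruct (Z.even j) eqn:E.
  - apply Z.even_spec in E. destruct E as [m ->].
    rewrite mult_IZR. rewrite cos_Zperiod. ring.
  - assert (Z.odd j = true) by (rewrite <- Z.negb_even, E; reflexivity).
    apply Z.odd_spec in H. destruct H as [m ->].
    rewrite plus_IZR, mult_IZR.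
    replace (x + (2 * IZR m + 1) * PI) with ((x + PI) + 2 * IZR m * PI) by ring.
    rewrite cos_Zperiod, neg_cos. ring.
Qed.

Lemma frac_exists r : exists N : Z, 0 <= r + IZR N < 1.
Proof.
  destruct (archimed r) as [H1 H2]. exists (- (up r - 1))%Z.
  rewrite opp_IZR, minus_IZR. lra.
Qed.

Lemma repr2pi t : exists t0 j, 0 <= t0 < 2 * PI /\ t = t0 + 2 * IZR j * PI.
Proof.
  pose proof PI_RGT_0.
  destruct (frac_exists (t / (2 * PI))) as [N HN].
  exists (t + 2 * IZR N * PI), (- N)%Z. rewrite opp_IZR. split; [|ring].
  replace (t + 2 * IZR N * PI) with ((2 * PI) * (t / (2 * PI) + IZR N)) by (field; lra).
  split; nra.
Qed.

Lemma liss_period nx ny nz px py pz t j :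
  lissajous nx ny nz px py pz (t + 2 * IZR j * PI) = lissajous nx ny nz px py pz t.
Proof.
  unfold lissajous.
  assert (E : forall n p, cos (INR n * (t + 2 * IZR j * PI) + p) = cos (INR n * t + p)).
  { intros n p. replace (INR n * (t + 2 * IZR j * PI) + p) with
      ((INR n * t + p) + 2 * IZR (Z.of_nat n * j) * PI).
    apply cos_Zperiod. rewrite mult_IZR, <- INR_IZR_INZ. ring. }
  rewrite !E. reflexivity.
Qed.

Lemma smap_inj ex ey ez a b : ex <> 0 -> ey <> 0 -> ez <> 0 ->
  smap ex ey ez a = smap ex ey ez b -> a = b.
Proof.
  intros H1 H2 H3. destruct a as [[a1 a2] a3]; destruct b as [[b1 b2] b3]; simpl.
  intro E. injection E. intros E3 E2 E1.
  apply Rmult_eq_reg_l in E1; auto. apply Rmult_eq_reg_l in E2; auto.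
  apply Rmult_eq_reg_l in E3; auto. subst. reflexivity.
Qed.

Lemma sgn_nz j : sgn j <> 0.
Proof. destruct (sgn_pm j) as [-> | ->]; lra. Qed.

Lemma kum_ext A B B' : knot_equiv_up_to_mirror A B -> (forall p, B p <-> B' p) ->
  knot_equiv_up_to_mirror A B'.
Proof.
  intros [K|K] E; [left|right]; eapply ke_ext; eauto.
Qed.

Lemma transfer (K L : R -> pt) ex ey ez c :
  (forall t j, K (t + 2 * IZR j * PI) = K t) ->
  (forall t j, L (t + 2 * IZR j * PI) = L t) ->
  (forall t, L t = smap ex ey ez (K (t + c))) ->
  forall p, curve_image L p <-> img (smap ex ey ez) (curve_image K) p.
Proof.
  intros PK PL HL p. pose proof PI_RGT_0. unfold curve_image, img. split.
  - intros [t [Ht E]]. rewrite HL in E.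
    destruct (repr2pi (t + c)) as [t0 [j [Ht0 Ej]]].
    exists (K t0). split. exists t0; split; [lra|reflexivity].
    rewrite Ej, PK in E. exact E.
  - intros [q [[t0 [Ht0 Eq]] E]].
    destruct (repr2pi (t0 - c)) as [t1 [j [Ht1 Ej]]].
    exists t1. split; [lra|]. rewrite HL, <- E, <- Eq.
    f_equal. replace (t1 + c) with (t0 + 2 * IZR (- j) * PI).
    apply PK. rewrite opp_IZR. lra.
Qed.

Lemma transfer_emb (K L : R -> pt) ex ey ez c :
  ex <> 0 -> ey <> 0 -> ez <> 0 ->
  (forall t j, K (t + 2 * IZR j * PI) = K t) ->
  (forall t, L t = smap ex ey ez (K (t + c))) ->
  (forall s t, 0 <= s < 2 * PI -> 0 <= t < 2 * PI -> K s = K t -> s = t) ->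
  (forall s t, 0 <= s < 2 * PI -> 0 <= t < 2 * PI -> L s = L t -> s = t).
Proof.
  intros N1 N2 N3 PK HL EK s t Hs Ht E. pose proof PI_RGT_0.
  rewrite !HL in E. apply smap_inj in E; auto.
  destruct (repr2pi (s + c)) as [s0 [i [Hs0 Ei]]].
  destruct (repr2pi (t + c)) as [t0 [j [Ht0 Ej]]].
  rewrite Ei, Ej, !PK in E. apply EK in E; auto. subst t0.
  assert (Hd : s - t = 2 * IZR (i - j) * PI) by (rewrite minus_IZR; lra).
  assert (-1 < IZR (i - j) < 1).
  { split; apply (Rmult_lt_reg_r (2 * PI)); nra. }
  destruct H0 as [H1 H2]. apply lt_IZR in H1, H2.
  assert (i - j = 0)%Z by lia. rewrite H0 in Hd. simpl in Hd. lra.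
Qed.

Theorem theorem3 :
  forall (nx ny nz : nat),
    (0 < nx)%nat -> (0 < ny)%nat -> (0 < nz)%nat ->
    Nat.gcd nx ny = 1%nat -> Nat.gcd ny nz = 1%nat -> Nat.gcd nx nz = 1%nat ->
    forall px py pz : R,
      embedded nx ny nz px py pz ->
      exists py' pz' : R,
        0 <= py' <= PI / INR nx /\ 0 <= pz' <= PI /\
        embedded nx ny nz 0 py' pz' /\
        knot_equiv_up_to_mirror
          (curve_image (lissajous nx ny nz px py pz))
          (curve_image (lissajous nx ny nz 0 py' pz')).
Proof.
  intros nx ny nz Hx Hy Hz Gxy _ _ px py pz Hemb.
  pose proof PI_RGT_0 as HPI.
  assert (Hnx : 0 < INR nx) by (apply lt_0_INR; lia).
  destruct (Nat.gcd_bezout_pos nx ny Hx) as [a [b Hab]]. rewrite Gxy in Hab.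
  assert (HB : (Z.of_nat ny * (- Z.of_nat b) + Z.of_nat nx * Z.of_nat a = 1)%Z) by lia.
  set (u := py - INR ny * px / INR nx).
  destruct (frac_exists (u * INR nx / PI)) as [N HN].
  set (k := (- Z.of_nat b * N)%Z). set (m := (Z.of_nat a * N)%Z).
  assert (HkmZ : (Z.of_nat ny * k + Z.of_nat nx * m = N)%Z).
  { unfold k, m. transitivity ((Z.of_nat ny * (- Z.of_nat b) + Z.of_nat nx * Z.of_nat a) * N)%Z; [ring|]. rewrite HB. ring. }
  assert (Hkm : INR ny * IZR k + INR nx * IZR m = IZR N).
  { rewrite <- HkmZ, plus_IZR, !mult_IZR, <- !INR_IZR_INZ. reflexivity. }
  set (py' := u + IZR N * PI / INR nx).
  set (c := (IZR k * PI - px) / INR nx).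
  set (w := INR nz * c + pz).
  destruct (frac_exists (w / PI)) as [l Hl].
  set (pz' := w + IZR l * PI).
  set (K := lissajous nx ny nz px py pz).
  set (L := lissajous nx ny nz 0 py' pz').
  assert (HL : forall t, L t = smap (sgn (- k)) (sgn m) (sgn l) (K (t + c))).
  { intro t. unfold L, K, lissajous, smap.
    rewrite <- !cos_kpi.
    apply (f_equal2 pair); [apply (f_equal2 pair)|]; f_equal.
    - unfold c. rewrite opp_IZR. field. lra.
    - unfold py', u, c. rewrite <- Hkm. field. lra.
    - unfold pz', w. ring. }
  exists py', pz'. split; [|split; [|split]].
  - replace py' with (PI / INR nx * (u * INR nx / PI + IZR N)) by (unfold py'; field; lra).
    assert (0 < PI / INR nx) by (apply Rdiv_lt_0_compat; lra). nra.
  - replace pz' with (PI * (w / PI + IZR l)) by (unfold pz'; field; lra). nra.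
  - intros s t Hs Ht E.
    apply (transfer_emb K L (sgn (-k)) (sgn m) (sgn l) c); auto using sgn_nz.
    intros; apply liss_period.
  - apply (kum_ext _ (img (smap (sgn (-k)) (sgn m) (sgn l)) (curve_image K))).
    apply sign_case; apply sgn_pm.
    intro p. symmetry. apply (transfer K L _ _ _ c); auto; intros; apply liss_period.
Qed.
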